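(* Let $(a_0,a_1,\ldots,a_n)$ be a finite sequence of positive integers and $\omega=[a_0,a_1,\ldots,a_n,1,1,1,\ldots]$. Then for every $\varepsilon>0$ there exist an integer $m>0$ and a positive integer $N$ such that the number $\beta$ whose continued fraction digits (indexed from $0$) are $a_0,\ldots,a_n$ in positions $0,\ldots,n$, the digit $N$ in position $n+m$, and $1$ in all other positions, satisfies $$\Phi(\omega)+\varepsilon<\Phi(\beta)<\Phi(\omega)+2\varepsilon.$$
   Context: For positive integers $d_0,d_1,\ldots$, $[d_0,d_1,d_2,\ldots]$ denotes the continued fraction $\cfrac{1}{d_0+\cfrac{1}{d_1+\cfrac{1}{d_2+\cdots}}}$, and for $\beta=[d_0,d_1,\ldots]$ we write $\alpha_j(\beta)=[d_j,d_{j+1},\ldots]$. The Yoccoz Brjuno function is $\Phi(\beta)=\sum_{k\ge 0}\alpha_0(\beta)\alpha_1(\beta)\cdots\alpha_{k-1}(\beta)\log\frac{1}{\alpha_k(\beta)}\in[0,\infty]$ (the $k=0$ term is $\log\frac{1}{\alpha_0(\beta)}$). *)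

(* Defs.v *)
From Stdlib Require Import Reals.
From Coquelicot Require Import Coquelicot.
Open Scope R_scope.

Fixpoint cf_fin (k : nat) (d : nat -> nat) : R :=
  match k with
  | O => / INR (d O)
  | S k' => / (INR (d O) + cf_fin k' (fun i => d (S i)))
  end.

(* Infinite continued fraction [d0, d1, d2, ...] as the limit of convergents
   (digits are positive integers in all uses). *)
Definition cf (d : nat -> nat) : R := real (Lim_seq (fun k => cf_fin k d)).

Definition alpha (j : nat) (d : nat -> nat) : R := cf (fun i => d (j + i)%nat).

Fixpoint alpha_prod (k : nat) (d : nat -> nat) : R :=
  match k with
  | O => 1
  | S k' => alpha_prod k' d * alpha k' d
  end.

(* Yoccoz Brjuno function, valued in [0, +oo] (nonnegative terms, so the
   limit of partial sums exists in Rbar). *)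
Definition Phi (d : nat -> nat) : Rbar :=
  Lim_seq (fun K => sum_f_R0 (fun k => alpha_prod k d * ln (/ alpha k d)) K).

Definition omega_digits (n : nat) (a : nat -> nat) : nat -> nat :=
  fun i => if Nat.leb i n then a i else 1%nat.

Definition beta_digits (n : nat) (a : nat -> nat) (m N : nat) : nat -> nat :=
  fun i => if Nat.leb i n then a i
           else if Nat.eqb i (n + m)%nat then N else 1%nat.

(* Main.v *)
Require Import Defs.
From Stdlib Require Import Reals Lra Lia Psatz FunctionalExtensionality Znat.
From Coquelicot Require Import Coquelicot.
Open Scope R_scope.

Definition shift (f : nat -> nat) : nat -> nat := fun i => f (S i).

Fixpoint prep (K : nat) (f e : nat -> nat) : nat -> nat :=
  match K with
  | O => e
  | S K' => fun i => match i with O => f O | S i' => prep K' (shift f) e i' end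
  end.

Fixpoint val (K : nat) (f : nat -> nat) (y : R) : R :=
  match K with
  | O => y
  | S K' => / (INR (f O) + val K' (shift f) y)
  end.

Fixpoint Pp (K : nat) (f : nat -> nat) (y : R) : R :=
  match K with
  | O => 1
  | S K' => val K f y * Pp K' (shift f) y
  end.

Fixpoint Psi (K : nat) (f : nat -> nat) (y F : R) : R :=
  match K with
  | O => F
  | S K' => ln (/ val K f y) + val K f y * Psi K' (shift f) y F
  end.

Fixpoint Bnd (K : nat) (f : nat -> nat) : R :=
  match K with
  | O => 2
  | S K' => (if Nat.eqb (f O) 1 then 0 else INR (f O)) + Bnd K' (shift f)
  end.

Definition PS (d : nat -> nat) (K : nat) : R :=
  sum_f_R0 (fun k => alpha_prod k d * ln (/ alpha k d)) K.

Definition posd (f : nat -> nat) := forall i, (0 < f i)%nat.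

Lemma posd_shift f : posd f -> posd (shift f).
Proof. intros H i; apply H. Qed.

Lemma INR_pos_ge1 c : (0 < c)%nat -> 1 <= INR c.
Proof. intros H. apply (le_INR 1 c). lia. Qed.

Lemma val_bounds K f y : posd f -> 0 <= y <= 1 -> 0 <= val K f y <= 1.
Proof.
  revert f; induction K as [|K IH]; intros f Hf Hy; simpl; [lra|].
  assert (Hc := INR_pos_ge1 _ (Hf O)).
  destruct (IH (shift f) (posd_shift _ Hf) Hy).
  split.
  - left; apply Rinv_0_lt_compat; lra.
  - rewrite <- Rinv_1; apply Rinv_le_contravar; lra.
Qed.

Lemma Pp_bounds K f y : posd f -> 0 <= y <= 1 -> 0 <= Pp K f y <= 1.
Proof.
  revert f; induction K as [|K IH]; intros f Hf Hy; [simpl; lra|].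
  change (Pp (S K) f y) with (val (S K) f y * Pp K (shift f) y).
  destruct (val_bounds (S K) f y Hf Hy).
  destruct (IH (shift f) (posd_shift _ Hf) Hy).
  split; nra.
Qed.

Lemma val_pos K f y : posd f -> 0 < y <= 1 -> 0 < val K f y.
Proof.
  revert f; induction K as [|K IH]; intros f Hf Hy; simpl; [lra|].
  assert (Hc := INR_pos_ge1 _ (Hf O)).
  assert (H := val_bounds K (shift f) y (posd_shift _ Hf) ltac:(lra)).
  apply Rinv_0_lt_compat; lra.
Qed.

Lemma val_succ_pos K f y : posd f -> 0 <= y <= 1 -> 0 < val (S K) f y.
Proof.
  intros Hf Hy. simpl.
  assert (Hc := INR_pos_ge1 _ (Hf O)).
  assert (H := val_bounds K (shift f) y (posd_shift _ Hf) Hy).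
  apply Rinv_0_lt_compat; lra.
Qed.

Lemma ln_inv_nonneg x : 0 < x <= 1 -> 0 <= ln (/ x).
Proof.
  intros H. rewrite <- ln_1. destruct (Req_dec x 1) as [->|Hn].
  - rewrite Rinv_1; lra.
  - left; apply ln_increasing; [lra|]. rewrite <- Rinv_1.
    apply Rinv_lt_contravar; lra.
Qed.

Lemma Bnd_ge2 K f : posd f -> 2 <= Bnd K f.
Proof.
  revert f; induction K as [|K IH]; intros f Hf; simpl; [lra|].
  assert (Hc := INR_pos_ge1 _ (Hf O)).
  specialize (IH _ (posd_shift _ Hf)).
  destruct (Nat.eqb (f O) 1); lra.
Qed.

Lemma ln_le_xm1 x : 0 < x -> ln x <= x - 1.
Proof.
  intros H. pose proof (exp_ineq1_le (ln x)). rewrite exp_ln in H0; lra.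
Qed.

Lemma Psi_ge K f y F : posd f -> 0 <= y <= 1 -> 0 <= F -> Pp K f y * F <= Psi K f y F.
Proof.
  revert f; induction K as [|K IH]; intros f Hf Hy HF; [simpl; lra|].
  change (Psi (S K) f y F) with (ln (/ val (S K) f y) + val (S K) f y * Psi K (shift f) y F).
  change (Pp (S K) f y) with (val (S K) f y * Pp K (shift f) y).
  assert (H1 := val_succ_pos K f y Hf Hy).
  assert (H2 := val_bounds (S K) f y Hf Hy).
  assert (H3 := ln_inv_nonneg (val (S K) f y) ltac:(lra)).
  specialize (IH _ (posd_shift _ Hf) Hy HF).
  nra.
Qed.

Lemma Psi_le K f y F : posd f -> 0 <= y <= 1 -> 0 <= F -> Psi K f y F <= Bnd K f + Pp K f y * F.
Proof.
  revert f; induction K as [|K IH]; intros f Hf Hy HF; [simpl; lra|].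
  change (Psi (S K) f y F) with (ln (/ val (S K) f y) + val (S K) f y * Psi K (shift f) y F).
  change (Pp (S K) f y) with (val (S K) f y * Pp K (shift f) y).
  change (Bnd (S K) f) with ((if Nat.eqb (f O) 1 then 0 else INR (f O)) + Bnd K (shift f)).
  change (val (S K) f y) with (/ (INR (f O) + val K (shift f) y)).
  assert (Hc := INR_pos_ge1 _ (Hf O)).
  assert (Hu := val_bounds K (shift f) y (posd_shift _ Hf) Hy).
  set (u := val K (shift f) y) in *.
  assert (HB := Bnd_ge2 K (shift f) (posd_shift _ Hf)).
  specialize (IH _ (posd_shift _ Hf) Hy HF).
  assert (HP := Pp_bounds K (shift f) y (posd_shift _ Hf) Hy).
  rewrite Rinv_inv.
  assert (Hl := ln_le_xm1 (INR (f O) + u) ltac:(lra)).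
  assert (Hv : 0 < / (INR (f O) + u)) by (apply Rinv_0_lt_compat; lra).
  assert (Hv1 : / (INR (f O) + u) * (INR (f O) + u) = 1) by (field; lra).
  set (v := / (INR (f O) + u)) in *.
  assert (v <= 1) by nra.
  destruct (Nat.eqb_spec (f O) 1) as [E|E].
  - rewrite E in *. simpl in Hl, Hv1 |- *.
    assert (v * Bnd K (shift f) <= Bnd K (shift f) - u) by nra.
    nra.
  - nra.
Qed.

Lemma val_diff K f y y' : posd f -> 0 <= y <= 1 -> 0 <= y' <= 1 ->
  Rabs (val K f y - val K f y') = Pp K f y * Pp K f y' * Rabs (y - y').
Proof.
  revert f; induction K as [|K IH]; intros f Hf Hy Hy'; [simpl; ring|].
  change (Pp (S K) f y) with (val (S K) f y * Pp K (shift f) y).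
  change (Pp (S K) f y') with (val (S K) f y' * Pp K (shift f) y').
  change (val (S K) f y) with (/ (INR (f O) + val K (shift f) y)).
  change (val (S K) f y') with (/ (INR (f O) + val K (shift f) y')).
  assert (Hc := INR_pos_ge1 _ (Hf O)).
  assert (Hu := val_bounds K (shift f) y (posd_shift _ Hf) Hy).
  assert (Hu' := val_bounds K (shift f) y' (posd_shift _ Hf) Hy').
  specialize (IH _ (posd_shift _ Hf) Hy Hy').
  set (u := val K (shift f) y) in *. set (u' := val K (shift f) y') in *.
  replace (/ (INR (f O) + u) - / (INR (f O) + u')) with
    ((/ (INR (f O) + u) * / (INR (f O) + u')) * (u' - u)) by (field; lra).
  rewrite Rabs_mult, Rabs_minus_sym, IH.
  rewrite Rabs_right.
  - ring.
  - left; apply Rmult_lt_0_compat; apply Rinv_0_lt_compat; lra.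
Qed.

Lemma ln_diff a b m : 0 < m -> m <= a -> m <= b -> Rabs (ln a - ln b) <= Rabs (a - b) / m.
Proof.
  intros Hm Ha Hb.
  assert (forall x z, m <= x -> m <= z -> ln x - ln z <= Rabs (x - z) / m).
  { intros x z Hx Hz. rewrite <- ln_div by lra.
    pose proof (ln_le_xm1 (x / z) ltac:(apply Rdiv_lt_0_compat; lra)).
    assert (x / z - 1 = (x - z) / z) by (field; lra).
    assert ((x - z) / z <= Rabs (x - z) / m).
    { destruct (Rle_dec x z).
      - apply Rle_trans with 0.
        + unfold Rdiv. assert (0 < / z) by (apply Rinv_0_lt_compat; lra). nra.
        + unfold Rdiv. assert (0 < / m) by (apply Rinv_0_lt_compat; lra).
          pose proof (Rabs_pos (x - z)). nra.
      - rewrite Rabs_right by lra. unfold Rdiv.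
        apply Rmult_le_compat_l; [lra|]. apply Rinv_le_contravar; lra. }
    lra. }
  unfold Rabs at 1. destruct (Rcase_abs (ln a - ln b)).
  - rewrite Rabs_minus_sym. pose proof (H b a Hb Ha). lra.
  - apply H; auto.
Qed.

Lemma est K f y y' F F' : posd f -> 0 <= y <= 1 -> 0 <= y' <= 1 -> 0 <= F -> 0 <= F' ->
  Rabs (Psi K f y F - Psi K f y' F') <=
  Pp K f y * (Rabs (F - F') + INR K * Rabs (y - y') * (2 + Bnd K f + F')).
Proof.
  revert f; induction K as [|K IH]; intros f Hf Hy Hy' HF HF'.
  { simpl. pose proof (Rabs_pos (y - y')). lra. }
  change (Psi (S K) f y F) with (ln (/ val (S K) f y) + val (S K) f y * Psi K (shift f) y F).
  change (Psi (S K) f y' F') with (ln (/ val (S K) f y') + val (S K) f y' * Psi K (shift f) y' F').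
  change (Pp (S K) f y) with (val (S K) f y * Pp K (shift f) y).
  change (Bnd (S K) f) with ((if Nat.eqb (f O) 1 then 0 else INR (f O)) + Bnd K (shift f)).
  assert (HBB : Bnd K (shift f) <= (if Nat.eqb (f O) 1 then 0 else INR (f O)) + Bnd K (shift f)).
  { pose proof (INR_pos_ge1 _ (Hf O)). destruct (Nat.eqb (f O) 1); lra. }
  set (BB := (if Nat.eqb (f O) 1 then 0 else INR (f O)) + Bnd K (shift f)) in *.
  change (val (S K) f y) with (/ (INR (f O) + val K (shift f) y)).
  change (val (S K) f y') with (/ (INR (f O) + val K (shift f) y')).
  assert (Hc := INR_pos_ge1 _ (Hf O)).
  assert (Hf' := posd_shift _ Hf).
  assert (Hu := val_bounds K (shift f) y Hf' Hy).
  assert (Hu' := val_bounds K (shift f) y' Hf' Hy').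
  assert (Hd := val_diff K (shift f) y y' Hf' Hy Hy').
  assert (HP := Pp_bounds K (shift f) y Hf' Hy).
  assert (HP' := Pp_bounds K (shift f) y' Hf' Hy').
  assert (HPsi' := Psi_le K (shift f) y' F' Hf' Hy' HF').
  assert (HPsi'0 := Psi_ge K (shift f) y' F' Hf' Hy' HF').
  assert (HB := Bnd_ge2 K (shift f) Hf').
  specialize (IH _ Hf' Hy Hy' HF HF').
  set (u := val K (shift f) y) in *. set (u' := val K (shift f) y') in *.
  set (P := Pp K (shift f) y) in *. set (P' := Pp K (shift f) y') in *.
  set (c := INR (f O)) in *.
  set (Ps := Psi K (shift f) y F) in *. set (Ps' := Psi K (shift f) y' F') in *.
  set (B := Bnd K (shift f)) in *.
  set (dy := Rabs (y - y')) in *.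
  assert (Hdy : 0 <= dy) by apply Rabs_pos.
  rewrite !Rinv_inv.
  assert (Hv : 0 < / (c + u)) by (apply Rinv_0_lt_compat; lra).
  assert (Hv' : 0 < / (c + u')) by (apply Rinv_0_lt_compat; lra).
  assert (Hvv : / (c + u) * (c + u) = 1) by (field; lra).
  assert (Hvv' : / (c + u') * (c + u') = 1) by (field; lra).
  assert (Hln : Rabs (ln (c + u) - ln (c + u')) <= 2 * / (c + u) * P * dy).
  { eapply Rle_trans. apply (ln_diff _ _ c); lra.
    replace (c + u - (c + u')) with (u - u') by ring. rewrite Hd.
    unfold Rdiv. assert (0 < / c) by (apply Rinv_0_lt_compat; lra).
    assert (/ c <= 2 * / (c + u)).
    { assert (/ (2 * c) <= / (c + u)) by (apply Rinv_le_contravar; lra).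
      rewrite Rinv_mult in H0. lra. }
    assert (0 <= P * dy) by nra.
    assert (P * P' * dy <= P * dy) by (replace (P * P' * dy) with ((P * dy) * P') by ring; nra).
    assert (0 <= P * P' * dy) by (replace (P * P' * dy) with ((P * dy) * P') by ring; nra).
    nra. }
  set (v := / (c + u)) in *. set (v' := / (c + u')) in *.
  assert (Hvd : v - v' = v * v' * (u' - u)) by (unfold v, v'; field; lra).
  assert (Hvd' : Rabs (v - v') = v * v' * (P * P' * dy)).
  { rewrite Hvd, Rabs_mult, Rabs_minus_sym, Hd. rewrite Rabs_right; [ring|]. nra. }
  assert (Hv1 : v <= 1) by nra. assert (Hv1' : v' <= 1) by nra.
  replace (ln (c + u) + v * Ps - (ln (c + u') + v' * Ps'))
    with ((ln (c + u) - ln (c + u')) + v * (Ps - Ps') + (v - v') * Ps') by ring.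
  eapply Rle_trans. apply Rabs_triang.
  eapply Rle_trans. apply Rplus_le_compat_r. apply Rabs_triang.
  rewrite !Rabs_mult. rewrite Hvd'. rewrite (Rabs_right v) by lra.
  rewrite (Rabs_right Ps') by nra.
  assert (T2 : v * v' * (P * P' * dy) * Ps' <= v * P * dy * (B + F')).
  { assert (Ps' <= B + F') by nra.
    assert (v' * P' * Ps' <= B + F').
    { assert (0 <= v' * P') by nra. assert (v' * P' <= 1) by nra.
      assert (0 <= Ps') by nra. nra. }
    assert (0 <= v * P) by nra.
    assert (0 <= v * P * dy) by nra.
    assert (v * v' * (P * P' * dy) * Ps' = (v * P * dy) * (v' * P' * Ps')) by ring.
    nra. }
  assert (T3 : v * Rabs (Ps - Ps') <= v * (P * (Rabs (F - F') + INR K * dy * (2 + B + F')))) by nra.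
  rewrite S_INR.
  assert (0 <= INR K) by apply pos_INR.
  assert (INR K * dy * (2 + B + F') <= INR K * dy * (2 + BB + F')).
  { apply Rmult_le_compat_l; nra. }
  assert (0 <= v * P) by nra.
  assert (0 <= INR K * dy) by nra.
  assert (v * (P * (Rabs (F - F') + INR K * dy * (2 + B + F'))) <=
          v * P * (Rabs (F - F') + INR K * dy * (2 + BB + F'))) by nra.
  assert (2 * v * P * dy + v * P * dy * (B + F') <= v * P * (1 * dy * (2 + BB + F'))).
  { assert (0 <= v * P * dy) by nra.
    assert (0 <= (v * P * dy) * (BB - B)) by nra. nra. }
  nra.
Qed.

Lemma sum_shift (f : nat -> R) K : sum_f_R0 f (S K) = f O + sum_f_R0 (fun k => f (S k)) K.
Proof.
  induction K as [|K IH]; simpl in *; [ring|]. rewrite IH. ring.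
Qed.

Lemma sum_scal (f : nat -> R) a K : sum_f_R0 (fun k => a * f k) K = a * sum_f_R0 f K.
Proof. induction K as [|K IH]; simpl; [ring|]. rewrite IH; ring. Qed.

Lemma alpha_S k d : alpha (S k) d = alpha k (shift d).
Proof. reflexivity. Qed.

Lemma alpha_prod_S k d : alpha_prod (S k) d = alpha O d * alpha_prod k (shift d).
Proof.
  induction k as [|k IH].
  - simpl. ring.
  - change (alpha_prod (S (S k)) d) with (alpha_prod (S k) d * alpha (S k) d).
    rewrite IH, alpha_S. simpl. ring.
Qed.

Lemma PS_S d K : PS d (S K) = ln (/ alpha O d) + alpha O d * PS (shift d) K.
Proof.
  unfold PS. rewrite sum_shift. simpl alpha_prod at 1. rewrite Rmult_1_l.
  f_equal. rewrite <- sum_scal. apply sum_eq. intros i _.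
  rewrite alpha_prod_S, alpha_S. ring.
Qed.

Lemma cf_is d (L : R) : is_lim_seq (fun k => cf_fin k d) L -> cf d = L.
Proof. intros H. unfold cf. rewrite (is_lim_seq_unique _ _ H). reflexivity. Qed.

Lemma cf_step d (L : R) : (0 < d O)%nat -> 0 <= L ->
  is_lim_seq (fun k => cf_fin k (shift d)) L ->
  is_lim_seq (fun k => cf_fin k d) (/ (INR (d O) + L)).
Proof.
  intros Hd HL H. apply is_lim_seq_incr_1.
  assert (Hc := INR_pos_ge1 _ Hd).
  assert (H2 : is_lim_seq (fun k => INR (d O) + cf_fin k (shift d)) (INR (d O) + L)).
  { apply is_lim_seq_plus'; [apply is_lim_seq_const | exact H]. }
  apply is_lim_seq_inv in H2; [| intro E; injection E; lra].
  simpl in H2. exact H2.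
Qed.

Lemma PS_step d v (Fs : R) : alpha O d = v ->
  is_lim_seq (PS (shift d)) Fs -> is_lim_seq (PS d) (ln (/ v) + v * Fs).
Proof.
  intros Hv H. apply is_lim_seq_incr_1.
  apply (is_lim_seq_ext (fun K => ln (/ v) + v * PS (shift d) K)).
  { intros K. rewrite PS_S, Hv. reflexivity. }
  apply is_lim_seq_plus'; [apply is_lim_seq_const|].
  apply (is_lim_seq_scal_l _ v _) in H. exact H.
Qed.

Lemma repr K f e y (F : R) : posd f -> 0 <= y <= 1 ->
  is_lim_seq (fun k => cf_fin k e) y -> is_lim_seq (PS e) F ->
  is_lim_seq (fun k => cf_fin k (prep K f e)) (val K f y) /\
  is_lim_seq (PS (prep K f e)) (Psi K f y F).
Proof.
  revert f; induction K as [|K IH]; intros f Hf Hy Hc HP; [simpl; auto|].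
  destruct (IH (shift f) (posd_shift _ Hf) Hy Hc HP) as [H1 H2].
  assert (Hu := val_bounds K (shift f) y (posd_shift _ Hf) Hy).
  assert (H3 : is_lim_seq (fun k => cf_fin k (prep (S K) f e)) (val (S K) f y)).
  { apply (cf_step (prep (S K) f e) (val K (shift f) y)); [apply Hf | apply Hu | exact H1]. }
  split; [exact H3|].
  apply (PS_step (prep (S K) f e) (val (S K) f y)); [|exact H2].
  change (cf (prep (S K) f e) = val (S K) f y). apply cf_is. exact H3.
Qed.

Definition ones : nat -> nat := fun _ => 1%nat.
Definition g0 : R := (sqrt 5 - 1) / 2.

Lemma g0_props : 0 < g0 < 1 /\ g0 * (1 + g0) = 1.
Proof.
  unfold g0. pose proof (sqrt_sqrt 5 ltac:(lra)). pose proof (sqrt_pos 5).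
  assert (1 < sqrt 5) by nra. assert (sqrt 5 < 3) by nra.
  split; [split|]; nra.
Qed.

Lemma cf_fin_ones k : cf_fin (S k) ones = / (1 + cf_fin k ones).
Proof. reflexivity. Qed.

Lemma cf_fin_ones_bounds k : 0 < cf_fin k ones <= 1.
Proof.
  induction k as [|k IH].
  - simpl. rewrite Rinv_1. lra.
  - rewrite cf_fin_ones. split.
    + apply Rinv_0_lt_compat; lra.
    + rewrite <- Rinv_1. apply Rinv_le_contravar; lra.
Qed.

Lemma cf_ones_close k : Rabs (cf_fin k ones - g0) <= g0 ^ k.
Proof.
  destruct g0_props as [[H0 H1] H2].
  induction k as [|k IH].
  - simpl. rewrite Rinv_1. rewrite Rabs_right by lra. lra.
  - rewrite cf_fin_ones. pose proof (cf_fin_ones_bounds k).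
    set (x := cf_fin k ones) in *.
    assert (E : / (1 + x) - g0 = (g0 - x) * / (1 + x) * g0).
    { assert (g0 = / (1 + g0)) by (apply (Rmult_eq_reg_r (1 + g0)); [rewrite Rinv_l by lra; lra | lra]).
      rewrite H3 at 1. rewrite H3 at 3. field. lra. }
    rewrite E, !Rabs_mult, Rabs_minus_sym.
    rewrite (Rabs_right g0) by lra.
    assert (0 < / (1 + x)) by (apply Rinv_0_lt_compat; lra).
    assert (/ (1 + x) <= 1) by (rewrite <- Rinv_1; apply Rinv_le_contravar; lra).
    rewrite (Rabs_right (/ (1 + x))) by lra.
    simpl. pose proof (Rabs_pos (x - g0)).
    assert (Rabs (x - g0) * / (1 + x) <= g0 ^ k) by nra.
    rewrite (Rmult_comm g0 (g0 ^ k)). apply Rmult_le_compat_r; lra.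
Qed.

Lemma cf_ones_lim : is_lim_seq (fun k => cf_fin k ones) g0.
Proof.
  destruct g0_props as [[H0 H1] H2].
  apply (is_lim_seq_le_le (fun k => g0 - g0 ^ k) _ (fun k => g0 + g0 ^ k)).
  - intros k. pose proof (cf_ones_close k). apply Rabs_le_between' in H. lra.
  - replace (Finite g0) with (Finite (g0 - 0)) by (f_equal; ring).
    apply is_lim_seq_minus'; [apply is_lim_seq_const|].
    apply is_lim_seq_geom. rewrite Rabs_right; lra.
  - replace (Finite g0) with (Finite (g0 + 0)) by (f_equal; ring).
    apply is_lim_seq_plus'; [apply is_lim_seq_const|].
    apply is_lim_seq_geom. rewrite Rabs_right; lra.
Qed.

Definition C0 : R := ln (/ g0) / (1 - g0).

Lemma alpha_ones k : alpha k ones = g0.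
Proof. apply cf_is. exact cf_ones_lim. Qed.

Lemma alpha_prod_ones k : alpha_prod k ones = g0 ^ k.
Proof. induction k as [|k IH]; simpl; [reflexivity|]. rewrite IH, alpha_ones. ring. Qed.

Lemma PS_ones_lim : is_lim_seq (PS ones) C0.
Proof.
  destruct g0_props as [[H0 H1] H2].
  eapply is_lim_seq_ext.
  { intros K. unfold PS. symmetry. erewrite sum_eq.
    2:{ intros i _. rewrite alpha_prod_ones, alpha_ones. rewrite Rmult_comm. reflexivity. }
    rewrite sum_scal. reflexivity. }
  unfold C0. unfold Rdiv.
  apply (is_lim_seq_scal_l _ (ln (/ g0)) (/ (1 - g0))).
  apply is_lim_seq_Reals.
  pose proof (GP_infinite g0 ltac:(rewrite Rabs_right; lra)) as G.
  unfold Pser, infinite_sum in G. intros eps Heps.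
  destruct (G eps Heps) as [N HN]. exists N. intros n Hn.
  specialize (HN n Hn). erewrite sum_eq. exact HN. intros; simpl; ring.
Qed.

Lemma C0_pos : 0 < C0.
Proof.
  destruct g0_props as [[H0 H1] H2]. unfold C0.
  apply Rdiv_lt_0_compat; [|lra].
  rewrite <- ln_1. apply ln_increasing; [lra|].
  rewrite <- Rinv_1. apply Rinv_lt_contravar; lra.
Qed.

Lemma prep_nth K f e i : prep K f e i = if Nat.ltb i K then f i else e (i - K)%nat.
Proof.
  revert f i; induction K as [|K IH]; intros f i.
  - simpl. rewrite Nat.sub_0_r. reflexivity.
  - destruct i as [|i]; [reflexivity|]. simpl prep. rewrite IH. reflexivity.
Qed.

Lemma Bnd_ones K f : (forall i, f i = 1%nat) -> Bnd K f = 2.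
Proof.
  revert f; induction K as [|K IH]; intros f Hf; [reflexivity|].
  simpl. rewrite Hf. simpl. rewrite IH; [ring|]. intros i; apply Hf.
Qed.

Lemma Bnd_ev M K f : (forall i, (M <= i)%nat -> f i = 1%nat) -> (M <= K)%nat -> Bnd K f = Bnd M f.
Proof.
  revert f K; induction M as [|M IH]; intros f K Hf HK.
  - simpl. apply Bnd_ones. intros i; apply Hf; lia.
  - destruct K as [|K]; [lia|]. simpl. rewrite (IH (shift f) K); [reflexivity| |lia].
    intros i Hi. apply Hf. lia.
Qed.

Lemma Pp_pairs M i K f y : posd f -> 0 <= y <= 1 -> (forall j, (M <= j)%nat -> f j = 1%nat) ->
  (M + 2 * i <= K)%nat -> Pp K f y <= (/ 2) ^ i.
Proof.
  revert f K; induction M as [|M IH]; intros f K Hf Hy H1 HK.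
  - revert f K Hf H1 HK. induction i as [|i IHi]; intros f K Hf H1 HK.
    + simpl. apply Pp_bounds; auto.
    + destruct K as [|[|K]]; try lia.
      change (Pp (S (S K)) f y) with
        (/ (INR (f O) + val (S K) (shift f) y) * (val (S K) (shift f) y * Pp K (shift (shift f)) y)).
      rewrite H1 by lia. simpl INR at 1.
      assert (Hw := val_bounds (S K) (shift f) y (posd_shift _ Hf) Hy).
      set (w := val (S K) (shift f) y) in *.
      assert (HP := Pp_bounds K (shift (shift f)) y (posd_shift _ (posd_shift _ Hf)) Hy).
      assert (IH' : Pp K (shift (shift f)) y <= (/ 2) ^ i).
      { apply IHi. apply posd_shift, posd_shift, Hf. intros j _. apply H1. lia. lia. }
      assert (Hq : / (1 + w) * w <= / 2).
      { apply (Rmult_le_reg_r (2 * (1 + w))). lra.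
        replace (/ (1 + w) * w * (2 * (1 + w))) with (2 * w) by (field; lra).
        replace (/ 2 * (2 * (1 + w))) with (1 + w) by field. lra. }
      assert (0 <= / (1 + w) * w).
      { apply Rmult_le_pos; [left; apply Rinv_0_lt_compat; lra | lra]. }
      simpl pow. nra.
  - destruct K as [|K]; [lia|].
    change (Pp (S K) f y) with (val (S K) f y * Pp K (shift f) y).
    assert (Hv := val_bounds (S K) f y Hf Hy).
    assert (HP := Pp_bounds K (shift f) y (posd_shift _ Hf) Hy).
    assert (Pp K (shift f) y <= (/ 2) ^ i).
    { apply IH. apply posd_shift, Hf. auto. intros j Hj. apply H1. lia. lia. }
    nra.
Qed.

Lemma Pp_lower K f : posd f -> exists p, 0 < p /\ forall y, 0 <= y <= 1 -> p <= Pp K f y.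
Proof.
  revert f; induction K as [|K IH]; intros f Hf.
  - exists 1. split; [lra|]. intros; simpl; lra.
  - destruct (IH (shift f) (posd_shift _ Hf)) as [p [Hp H]].
    assert (Hc := INR_pos_ge1 _ (Hf O)).
    exists (p * / (INR (f O) + 1)). split.
    + apply Rmult_lt_0_compat; [lra|]. apply Rinv_0_lt_compat; lra.
    + intros y Hy. change (Pp (S K) f y) with (/ (INR (f O) + val K (shift f) y) * Pp K (shift f) y).
      assert (Hu := val_bounds K (shift f) y (posd_shift _ Hf) Hy).
      assert (/ (INR (f O) + 1) <= / (INR (f O) + val K (shift f) y)).
      { apply Rinv_le_contravar; lra. }
      specialize (H y Hy).
      assert (0 < / (INR (f O) + 1)) by (apply Rinv_0_lt_compat; lra).
      nra.
Qed.

Lemma nat_unbounded r : exists N : nat, (1 <= N)%nat /\ r < INR N.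
Proof.
  destruct (archimed (Rabs r)) as [H1 _].
  assert (Hz : (0 < up (Rabs r))%Z).
  { apply lt_0_IZR. pose proof (Rabs_pos r). lra. }
  exists (Z.to_nat (up (Rabs r))). split; [lia|].
  rewrite INR_IZR_INZ, Z2Nat.id by lia. pose proof (Rle_abs r). lra.
Qed.

Lemma disc_ivt (D : nat -> R) eps : D 1%nat <= eps ->
  (exists N0, (1 <= N0)%nat /\ eps < D N0) ->
  (forall N, (1 <= N)%nat -> Rabs (D (S N) - D N) < eps) ->
  exists N, (1 <= N)%nat /\ eps < D N < 2 * eps.
Proof.
  intros H1 [N0 [HN0 HD0]] Hstep.
  assert (forall k, (exists N, (1 <= N)%nat /\ eps < D N < 2 * eps) \/ D (S k) <= eps).
  { induction k as [|k IH]; [right; exact H1|].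
    destruct IH as [IH|IH]; [left; exact IH|].
    destruct (Rle_dec (D (S (S k))) eps) as [Hl|Hl]; [right; exact Hl|].
    left. exists (S (S k)). split; [lia|].
    specialize (Hstep (S k) ltac:(lia)). apply Rabs_def2 in Hstep. lra. }
  destruct N0 as [|N0]; [lia|].
  destruct (H N0) as [H'|H']; [exact H'|lra].
Qed.

Lemma four_pow i : (INR i + 1) ^ 2 <= 4 ^ i.
Proof.
  induction i as [|i IH]; [simpl; lra|]. rewrite S_INR.
  change (4 ^ S i) with (4 * 4 ^ i).
  pose proof (pos_INR i). simpl in IH |- *. nra.
Qed.

Definition eN (N : nat) : nat -> nat := prep 1 (fun _ => N) ones.

Lemma beta_prep n a m N : (0 < m)%nat ->
  beta_digits n a m N = prep (n + m) (omega_digits n a) (eN N).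
Proof.
  intros Hm. apply functional_extensionality. intros i.
  rewrite prep_nth. unfold beta_digits, omega_digits, eN.
  destruct (Nat.leb_spec i n); destruct (Nat.ltb_spec i (n + m)); try lia; auto;
  destruct (Nat.eqb_spec i (n + m)); try lia; auto.
  - subst. replace (n + m - (n + m))%nat with 0%nat by lia. reflexivity.
  - destruct (i - (n + m))%nat eqn:E; [lia|]. reflexivity.
Qed.

Lemma omega_beta1 n a m : (0 < m)%nat -> omega_digits n a = beta_digits n a m 1.
Proof.
  intros Hm. apply functional_extensionality. intros i.
  unfold beta_digits, omega_digits.
  destruct (Nat.leb i n); auto. destruct (Nat.eqb i (n + m)); auto.
Qed.

Theorem mainTheorem3 (n : nat) (a : nat -> nat)
  (ha : forall i : nat, (i <= n)%nat -> (0 < a i)%nat)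
  (eps : R) (heps : 0 < eps) :
  exists m N : nat, (0 < m)%nat /\ (0 < N)%nat /\
    Rbar_lt (Rbar_plus (Phi (omega_digits n a)) (Finite eps))
            (Phi (beta_digits n a m N)) /\
    Rbar_lt (Phi (beta_digits n a m N))
            (Rbar_plus (Phi (omega_digits n a)) (Finite (2 * eps))).
Proof.
  set (w := omega_digits n a).
  assert (Hw : posd w).
  { intros i. unfold w, omega_digits. destruct (Nat.leb_spec i n); auto. }
  assert (Hw1 : forall i, (S n <= i)%nat -> w i = 1%nat).
  { intros i Hi. unfold w, omega_digits. destruct (Nat.leb_spec i n); auto; lia. }
  destruct g0_props as [[Hg0 Hg1] Hg2].
  pose proof C0_pos as HC.
  set (B := Bnd (S n) w).
  assert (HB : 2 <= B) by (apply Bnd_ge2; auto).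
  set (W := 4 + B + 2 * C0).
  destruct (nat_unbounded ((INR n + 5) * W / eps)) as [i [_ Hi]].
  set (m := S (4 * i)).
  set (K := (n + m)%nat).
  assert (HBK : Bnd K w = B) by (apply (Bnd_ev (S n)); auto; unfold K, m; lia).
  assert (HPK : forall y, 0 <= y <= 1 -> Pp K w y <= (/ 2) ^ (2 * i)).
  { intros y Hy. apply (Pp_pairs (S n)); auto. unfold K, m; lia. }
  set (yN := fun N : nat => / (INR N + g0)).
  set (FN := fun N : nat => ln (/ yN N) + yN N * C0).
  set (G := fun N : nat => Psi K w (yN N) (FN N)).
  assert (HyN : forall N, (1 <= N)%nat -> 0 < yN N <= 1).
  { intros N HN. unfold yN. assert (H1 := INR_pos_ge1 N HN). split.
    - apply Rinv_0_lt_compat; lra.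
    - rewrite <- Rinv_1. apply Rinv_le_contravar; lra. }
  assert (HFN : forall N, (1 <= N)%nat -> FN N = ln (INR N + g0) + yN N * C0).
  { intros N HN. unfold FN. f_equal. unfold yN. rewrite Rinv_inv. reflexivity. }
  assert (HFN0 : forall N, (1 <= N)%nat -> ln (INR N + g0) <= FN N).
  { intros N HN. rewrite HFN by auto. specialize (HyN N HN). nra. }
  assert (Hln0 : forall N, (1 <= N)%nat -> 0 <= ln (INR N + g0)).
  { intros N HN. assert (H1 := INR_pos_ge1 N HN). rewrite <- ln_1.
    left. apply ln_increasing; lra. }
  assert (HPhi : forall N, (1 <= N)%nat -> Phi (beta_digits n a m N) = Finite (G N)).
  { intros N HN. rewrite beta_prep by (unfold m; lia).
    assert (Hc : posd (fun _ : nat => N)) by (intros _; lia).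
    destruct (repr 1 (fun _ => N) ones g0 C0 Hc ltac:(lra) cf_ones_lim PS_ones_lim) as [R1 R2].
    specialize (HyN N HN).
    destruct (repr K w (eN N) (yN N) (FN N) Hw ltac:(lra) R1 R2) as [_ R4].
    unfold Phi. apply is_lim_seq_unique. exact R4. }
  assert (HO : Phi w = Finite (G 1%nat)).
  { unfold w. rewrite (omega_beta1 n a m) by (unfold m; lia). apply HPhi. lia. }
  assert (Hstep : forall N, (1 <= N)%nat -> Rabs (G (S N) - G N) < eps).
  { intros N HN.
    assert (HN' : (1 <= S N)%nat) by lia.
    pose proof (HyN N HN) as Y1. pose proof (HyN (S N) HN') as Y2.
    assert (F1 : 0 <= FN N) by (pose proof (HFN0 N HN); pose proof (Hln0 N HN); lra).
    assert (F2 : 0 <= FN (S N)) by (pose proof (HFN0 (S N) HN'); pose proof (Hln0 (S N) HN'); lra).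
    rewrite Rabs_minus_sym. unfold G.
    eapply Rle_lt_trans.
    { apply est; auto; lra. }
    rewrite HBK.
    set (t := INR N + g0).
    assert (Ht : 1 <= t) by (unfold t; pose proof (INR_pos_ge1 N HN); lra).
    assert (Et : INR (S N) + g0 = t + 1) by (unfold t; rewrite S_INR; ring).
    assert (EyN : yN N = / t) by reflexivity.
    assert (EyN' : yN (S N) = / (t + 1)) by (unfold yN; rewrite Et; reflexivity).
    rewrite (HFN N HN), (HFN (S N) HN'). rewrite Et, EyN, EyN'.
    rewrite EyN in Y1. rewrite EyN' in Y2.
    assert (Hdy : Rabs (/ t - / (t + 1)) = / t * / (t + 1)).
    { rewrite Rabs_right.
      - field; lra.
      - assert (/ t - / (t + 1) = / t * / (t + 1)) by (field; lra).
        rewrite H. left. apply Rmult_lt_0_compat; lra. }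
    assert (Hdy1 : / t * / (t + 1) <= 1) by nra.
    assert (Hdy0 : 0 <= / t * / (t + 1)) by nra.
    assert (HdF : Rabs (ln t + / t * C0 - (ln (t + 1) + / (t + 1) * C0)) <= 1 + C0).
    { replace (ln t + / t * C0 - (ln (t + 1) + / (t + 1) * C0))
        with ((ln t - ln (t + 1)) + (/ t - / (t + 1)) * C0) by ring.
      eapply Rle_trans. apply Rabs_triang.
      rewrite Rabs_mult, Hdy, (Rabs_right C0) by lra.
      pose proof (ln_diff t (t + 1) 1 ltac:(lra) ltac:(lra) ltac:(lra)).
      assert (E1 : Rabs (t - (t + 1)) / 1 = 1) by (rewrite Rabs_left by lra; field).
      rewrite E1 in H.
      nra. }
    assert (Hl1 : ln (t + 1) <= t) by (pose proof (ln_le_xm1 (t + 1) ltac:(lra)); lra).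
    assert (Hl0 : 0 <= ln (t + 1)) by (rewrite <- ln_1; left; apply ln_increasing; lra).
    assert (HdyF : / t * / (t + 1) * (2 + B + (ln (t + 1) + / (t + 1) * C0)) <= 3 + B + C0).
    { assert (/ t * / (t + 1) * ln (t + 1) <= 1).
      { assert (/ t * / (t + 1) * ln (t + 1) <= / t * / (t + 1) * t) by nra.
        assert (/ t * / (t + 1) * t = / (t + 1)) by (field; lra). nra. }
      assert (/ t * / (t + 1) * (/ (t + 1) * C0) <= C0).
      { assert (0 <= / (t + 1) * C0) by nra.
        assert (/ (t + 1) * C0 <= C0) by nra. nra. }
      nra. }
    rewrite Hdy.
    set (P := Pp K w (/ t)).
    assert (HP0 : 0 <= P) by (apply Pp_bounds; auto; lra).
    assert (HP1 : P <= (/ 2) ^ (2 * i)) by (apply HPK; lra).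
    assert (HK1 : 1 <= INR K) by (apply INR_pos_ge1; unfold K, m; lia).
    assert (HKb : INR K <= (INR n + 5) * (INR i + 1)).
    { unfold K, m. rewrite plus_INR, S_INR, mult_INR. simpl INR.
      pose proof (pos_INR n). pose proof (pos_INR i). nra. }
    assert (Hsum : Rabs (ln t + / t * C0 - (ln (t + 1) + / (t + 1) * C0)) +
                   INR K * (/ t * / (t + 1)) * (2 + B + (ln (t + 1) + / (t + 1) * C0)) <= INR K * W).
    { unfold W. rewrite Rmult_assoc. nra. }
    assert (HW : 0 < W) by (unfold W; lra).
    assert (Hq : (/ 2) ^ (2 * i) * (INR i + 1) ^ 2 <= 1).
    { rewrite pow_mult. replace ((/ 2) ^ 2) with (/ 4) by field.
      rewrite pow_inv. pose proof (four_pow i).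
      assert (0 < 4 ^ i) by (apply pow_lt; lra).
      apply (Rmult_le_reg_l (4 ^ i)); [lra|].
      rewrite <- Rmult_assoc, Rinv_r by lra. lra. }
    assert (Hi1 : 0 < INR i + 1) by (pose proof (pos_INR i); lra).
    assert (Hgoal : P * (INR K * W) < eps).
    { assert (P * (INR K * W) <= (/ 2) ^ (2 * i) * ((INR n + 5) * (INR i + 1) * W)).
      { apply Rmult_le_compat; try nra. }
      assert ((INR n + 5) * W < eps * (INR i + 1)).
      { unfold Rdiv in Hi. apply (Rmult_lt_compat_r eps) in Hi; [|lra].
        rewrite Rmult_assoc, Rinv_l in Hi by lra. lra. }
      assert ((/ 2) ^ (2 * i) * ((INR n + 5) * (INR i + 1) * W)
              = ((/ 2) ^ (2 * i) * (INR i + 1) ^ 2) * ((INR n + 5) * W / (INR i + 1)))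
        by (field; lra).
      assert ((INR n + 5) * W / (INR i + 1) < eps).
      { apply (Rmult_lt_reg_r (INR i + 1)); [lra|]. unfold Rdiv.
        rewrite Rmult_assoc, Rinv_l by lra. lra. }
      assert (0 <= (/ 2) ^ (2 * i) * (INR i + 1) ^ 2).
      { apply Rmult_le_pos; apply pow_le; lra. }
      assert (0 <= (INR n + 5) * W / (INR i + 1)).
      { apply Rmult_le_pos; [pose proof (pos_INR n); nra | left; apply Rinv_0_lt_compat; lra]. }
      nra. }
    eapply Rle_lt_trans; [|exact Hgoal].
    apply Rmult_le_compat_l; [lra|]. exact Hsum. }
  destruct (Pp_lower K w Hw) as [pi [Hpi Hpil]].
  destruct (nat_unbounded (exp ((G 1%nat + eps) / pi))) as [N0 [HN0 HN0']].
  assert (Hbig : G 1%nat + eps < G N0).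
  { pose proof (HyN N0 HN0) as Y.
    assert (F0 : 0 <= FN N0) by (pose proof (HFN0 N0 HN0); pose proof (Hln0 N0 HN0); lra).
    pose proof (Psi_ge K w (yN N0) (FN N0) Hw ltac:(lra) F0).
    pose proof (Hpil (yN N0) ltac:(lra)).
    assert ((G 1%nat + eps) / pi < ln (INR N0 + g0)).
    { rewrite <- (ln_exp ((G 1%nat + eps) / pi)). apply ln_increasing.
      apply exp_pos. lra. }
    pose proof (HFN0 N0 HN0).
    assert (G 1%nat + eps < pi * FN N0).
    { apply (Rmult_lt_reg_r (/ pi)). apply Rinv_0_lt_compat; lra.
      replace (pi * FN N0 * / pi) with (FN N0) by (field; lra). unfold Rdiv in H1. lra. }
    assert (0 <= (Pp K w (yN N0) - pi) * FN N0) by (apply Rmult_le_pos; lra).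
    change (Psi K w (yN N0) (FN N0)) with (G N0) in H. lra. }
  destruct (disc_ivt (fun N => G N - G 1%nat) eps) as [N [HN HNb]].
  - lra.
  - exists N0. split; auto. lra.
  - intros N HN. replace (G (S N) - G 1%nat - (G N - G 1%nat)) with (G (S N) - G N) by ring.
    apply Hstep; auto.
  - exists m, N. split; [unfold m; lia|]. split; [lia|].
    rewrite (HPhi N HN). fold w. rewrite HO. simpl. lra.
Qed.
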